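(* Every symmetric group $(G,r)$ of finite multipermutation level $\mathrm{mpl}(G,r)=m$ is a solvable group whose derived (solvable) length is at most $m$.
   Context: A symmetric group is a pair $(G,r)$, $G$ a group, $r(u,v)=({}^uv,u^v)$ an involutive bijection of $G\times G$ with ${}^a1=1,{}^1u=u,1^u=1,a^1=a$, ${}^{ab}u={}^a({}^bu)$, $a^{uv}=(a^u)^v$, ${}^a(uv)=({}^au)({}^{a^u}v)$, $(ab)^u=(a^{{}^bu})(b^u)$, $uv=({}^uv)(u^v)$; it is a non-degenerate symmetric set (non-degenerate involutive solution of the Yang–Baxter equation). For a non-degenerate symmetric set $(X,r)$, the retraction $\mathrm{Ret}(X,r)$ is $X/\!\sim$, where $x\sim y$ iff ${}^xz={}^yz$ for all $z\in X$, with $r_{[X]}([x],[y])=([{}^xy],[x^y])$; $\mathrm{Ret}^m$ is its $m$-fold iterate and $\mathrm{mpl}(X,r)=m$ if $m$ is minimal with $\mathrm{Ret}^m(X,r)$ a one-element set. *)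

(* Defs.v *)
Set Implicit Arguments.

Record is_group (G : Type) (mul : G -> G -> G) (one : G) (inv : G -> G) : Prop := {
  grp_assoc : forall a b c, mul a (mul b c) = mul (mul a b) c;
  grp_mul1g : forall a, mul one a = a;
  grp_mulg1 : forall a, mul a one = a;
  grp_mulVg : forall a, mul (inv a) a = one;
  grp_mulgV : forall a, mul a (inv a) = one
}.

(* A symmetric group (G, r) with r(u,v) = (lact u v, ract u v), i.e.
   lact u v = ^u v  and  ract u v = u^v. *)
Record is_symmetric_group (G : Type) (mul : G -> G -> G) (one : G) (inv : G -> G)
    (lact ract : G -> G -> G) : Prop := {
  sg_group : is_group mul one inv;
  (* r is involutive (hence a bijection of G x G) *)
  sg_invol_l : forall u v, lact (lact u v) (ract u v) = u;
  sg_invol_r : forall u v, ract (lact u v) (ract u v) = v;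
  sg_lact_a1 : forall a, lact a one = one;
  sg_lact_1u : forall u, lact one u = u;
  sg_ract_1u : forall u, ract one u = one;
  sg_ract_a1 : forall a, ract a one = a;
  sg_lact_mul : forall a b u, lact (mul a b) u = lact a (lact b u);
  sg_ract_mul : forall a u v, ract a (mul u v) = ract (ract a u) v;
  sg_lact_hom : forall a u v, lact a (mul u v) = mul (lact a u) (lact (ract a u) v);
  sg_ract_hom : forall a b u, ract (mul a b) u = mul (ract a (lact b u)) (ract b u);
  sg_mul_r : forall u v, mul u v = mul (lact u v) (ract u v)
}.

(* Iterated retraction, with Ret^k(G,r) represented as the quotient of G by
   the equivalence ret_rel k:  ret_rel 0 is equality on G, and
   [x]_k ~ [y]_k in Ret(Ret^k) iff ^[x] [z] = ^[y] [z] for all classes [z],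
   i.e. iff [^x z]_k = [^y z]_k for all z in G. *)
Fixpoint ret_rel (G : Type) (lact : G -> G -> G) (k : nat) : G -> G -> Prop :=
  match k with
  | O => fun x y => x = y
  | S k' => fun x y => forall z, ret_rel lact k' (lact x z) (lact y z)
  end.

Definition ret_trivial (G : Type) (lact : G -> G -> G) (k : nat) : Prop :=
  forall x y : G, ret_rel lact k x y.

Definition mpl_eq (G : Type) (lact : G -> G -> G) (m : nat) : Prop :=
  ret_trivial lact m /\ forall k, k < m -> ~ ret_trivial lact k.

Inductive comm_sub (G : Type) (mul : G -> G -> G) (one : G) (inv : G -> G)
    (H : G -> Prop) : G -> Prop :=
| cs_comm : forall x y, H x -> H y ->
    comm_sub mul one inv H (mul (mul (inv x) (inv y)) (mul x y))
| cs_one : comm_sub mul one inv H one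
| cs_mul : forall a b, comm_sub mul one inv H a -> comm_sub mul one inv H b ->
    comm_sub mul one inv H (mul a b)
| cs_inv : forall a, comm_sub mul one inv H a -> comm_sub mul one inv H (inv a).

Fixpoint derived (G : Type) (mul : G -> G -> G) (one : G) (inv : G -> G)
    (n : nat) : G -> Prop :=
  match n with
  | O => fun _ => True
  | S n' => comm_sub mul one inv (derived mul one inv n')
  end.

Definition solvable_length_le (G : Type) (mul : G -> G -> G) (one : G)
    (inv : G -> G) (n : nat) : Prop :=
  forall g, derived mul one inv n g -> g = one.

(* Main.v *)
Require Import Defs.
From Stdlib Require Import Arith Lia.

Set Implicit Arguments.
Record cong (G : Type) (mul : G -> G -> G) (inv : G -> G) (lact : G -> G -> G)
  (E : G -> G -> Prop) : Prop := {
  c_refl : forall a, E a a;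
  c_sym : forall a b, E a b -> E b a;
  c_trans : forall a b c, E a b -> E b c -> E a c;
  c_mul : forall a a' b b', E a a' -> E b b' -> E (mul a b) (mul a' b');
  c_inv : forall a a', E a a' -> E (inv a) (inv a');
  c_lact : forall a a' b b', E a a' -> E b b' -> E (lact a b) (lact a' b')
}.

Unset Implicit Arguments.

Section S.
Context (G : Type) (mul : G -> G -> G) (one : G) (inv : G -> G)
    (lact ract : G -> G -> G) (HS : is_symmetric_group mul one inv lact ract).

Let HG := sg_group HS.
Let assoc := grp_assoc HG.
Let m1g := grp_mul1g HG.
Let mg1 := grp_mulg1 HG.
Let mVg := grp_mulVg HG.
Let mgV := grp_mulgV HG.

Lemma lact_inv_l x z : lact (inv x) (lact x z) = z.
Proof. rewrite <- (sg_lact_mul HS), mVg. apply (sg_lact_1u HS). Qed.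
Lemma lact_inv_r x z : lact x (lact (inv x) z) = z.
Proof. rewrite <- (sg_lact_mul HS), mgV. apply (sg_lact_1u HS). Qed.

Lemma step (E : G -> G -> Prop) : cong mul inv lact E ->
  cong mul inv lact (fun x y => forall z, E (lact x z) (lact y z)).
Proof.
  intros C.
  assert (Hmul : forall a a' b b', (forall z, E (lact a z) (lact a' z)) ->
     (forall z, E (lact b z) (lact b' z)) ->
     forall z, E (lact (mul a b) z) (lact (mul a' b') z)).
  { intros a a' b b' Ha Hb z. rewrite !(sg_lact_mul HS).
    apply (c_trans C) with (lact a (lact b' z)).
    - apply (c_lact C); [apply (c_refl C)| apply Hb].
    - apply Ha. }
  assert (Hsub : forall a b, E a b -> forall z, E (lact a z) (lact b z)).
  { intros a b H z. apply (c_lact C); [exact H| apply (c_refl C)]. }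
  assert (Hsoc : forall s w, (forall z, E (lact s z) (lact one z)) ->
      forall z, E (lact (lact w s) z) (lact one z)).
  { intros s w Hs.
    set (t := mul (mul w s) (inv w)).
    assert (Ht : forall z, E (lact t z) (lact one z)).
    { intro z. replace (lact one z) with (lact (mul (mul w one) (inv w)) z).
      - apply Hmul; [apply Hmul|]; intros; try apply (c_refl C); auto.
      - rewrite mg1, mgV. reflexivity. }
    assert (E1 : E (lact t w) w).
    { specialize (Ht w). rewrite (sg_lact_1u HS) in Ht. exact Ht. }
    assert (E2 : E (ract t w) s).
    { assert (Hr : ract t w = mul (inv (lact t w)) (mul t w)).
      { rewrite (sg_mul_r HS t w), assoc, mVg, m1g. reflexivity. }
      rewrite Hr.
      apply (c_trans C) with (mul (inv w) (mul t w)).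
      - apply (c_mul C); [apply (c_inv C); exact E1| apply (c_refl C)].
      - unfold t. replace (mul (inv w) (mul (mul (mul w s) (inv w)) w)) with s.
        + apply (c_refl C).
        + rewrite <- !assoc, mVg, mg1, assoc, mVg, m1g. reflexivity. }
    assert (E3 : E t (lact w s)).
    { rewrite <- (sg_invol_l HS t w) at 1. apply (c_lact C); assumption. }
    intro z. apply (c_trans C) with (lact t z).
    - apply Hsub. apply (c_sym C). exact E3.
    - apply Ht. }
  assert (Hinv : forall a a', (forall z, E (lact a z) (lact a' z)) ->
      forall z, E (lact (inv a) z) (lact (inv a') z)).
  { intros a a' Ha z.
    rewrite <- (lact_inv_r a' z) at 1.
    apply (c_trans C) with (lact (inv a) (lact a (lact (inv a') z))).
    - apply (c_lact C); [apply (c_refl C)|]. apply (c_sym C). apply Ha.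
    - rewrite lact_inv_l. apply (c_refl C). }
  split.
  - intros; apply (c_refl C).
  - intros a b H z; apply (c_sym C); auto.
  - intros a b c H1 H2 z; apply (c_trans C) with (lact b z); auto.
  - exact Hmul.
  - exact Hinv.
  - intros x x' y y' Hx Hy z.
    apply (c_trans C) with (lact (lact x' y) z).
    + apply Hsub. apply Hx.
    + set (s := mul (inv y) y').
      assert (Hs : forall z, E (lact s z) (lact one z)).
      { intro u. unfold s. rewrite (sg_lact_mul HS), (sg_lact_1u HS).
        apply (c_trans C) with (lact (inv y) (lact y u)).
        - apply (c_lact C); [apply (c_refl C)|]. apply (c_sym C), Hy.
        - rewrite lact_inv_l. apply (c_refl C). }
      assert (Hy' : y' = mul y s).
      { unfold s. rewrite assoc, mgV, m1g. reflexivity. }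
      rewrite Hy', (sg_lact_hom HS).
      replace (lact (lact x' y) z) with (lact (mul (lact x' y) one) z)
        by (rewrite mg1; reflexivity).
      apply Hmul.
      * intros; apply (c_refl C).
      * intro u. apply (c_sym C). apply Hsoc. exact Hs.
Qed.

Lemma ret_cong n : cong mul inv lact (ret_rel lact n).
Proof.
  induction n as [|n IH].
  - split; simpl; intros; subst; reflexivity.
  - apply (step _ IH).
Qed.

Lemma inv_one : inv one = one.
Proof. rewrite <- (m1g (inv one)). apply mgV. Qed.

Lemma commB (E : G -> G -> Prop) (C : cong mul inv lact E) x y :
  (forall z, E (lact x z) (lact one z)) -> (forall z, E (lact y z) (lact one z)) ->
  E (mul (mul (inv x) (inv y)) (mul x y)) one.
Proof.
  intros Hx Hy.
  assert (E1 : E (lact x y) y).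
  { specialize (Hx y). rewrite (sg_lact_1u HS) in Hx. exact Hx. }
  assert (E2 : E x (ract x y)).
  { rewrite <- (sg_invol_l HS x y) at 1.
    apply (c_trans C) with (lact y (ract x y)).
    - apply (c_lact C); [exact E1| apply (c_refl C)].
    - specialize (Hy (ract x y)). rewrite (sg_lact_1u HS) in Hy. exact Hy. }
  apply (c_trans C) with (mul (mul (inv x) (inv y)) (mul y x)).
  - apply (c_mul C); [apply (c_refl C)|]. rewrite (sg_mul_r HS x y).
    apply (c_mul C); [exact E1| apply (c_sym C); exact E2].
  - replace (mul (mul (inv x) (inv y)) (mul y x)) with one; [apply (c_refl C)|].
    rewrite <- assoc, (assoc (inv y)), mVg, m1g, mVg. reflexivity.
Qed.

Lemma key j : forall n, ret_trivial lact (n + j) ->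
  forall g, derived mul one inv j g -> ret_rel lact n g one.
Proof.
  induction j as [|j IH]; intros n Ht g Hg.
  - rewrite Nat.add_0_r in Ht. apply Ht.
  - simpl in Hg. rewrite Nat.add_succ_r in Ht.
    specialize (IH (S n) Ht).
    pose proof (ret_cong n) as C.
    induction Hg.
    + apply (commB _ C); [apply (IH x H)| apply (IH y H0)].
    + apply (c_refl C).
    + rewrite <- (mg1 one). apply (c_mul C); assumption.
    + rewrite <- inv_one. apply (c_inv C); assumption.
Qed.

End S.

Theorem mainTheorem7 (G : Type) (mul : G -> G -> G) (one : G) (inv : G -> G)
    (lact ract : G -> G -> G) (m : nat) :
  is_symmetric_group mul one inv lact ract ->
  mpl_eq lact m ->
  solvable_length_le mul one inv m.
Proof.
  intros HS [Ht _] g Hg.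
  exact (key _ _ _ _ _ _ HS m 0 Ht g Hg).
Qed.
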